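(* In the setting of the context, consider the two families of linear inequalities $$x_t-x_{t-k}\le(\underline C+(k-m)V-\overline V)y_{t+m+1}+V\sum_{i=1}^m y_{t+i}+\overline V y_t-\underline C y_{t-k}-\sum_{s\in\mathcal S}(\underline C+(k-s)V-\overline V)(y_{t-s}-y_{t-s-1}),$$ indexed by all $k\in[1,T-1]_{\mathbb Z}$ with $\overline C-\underline C-kV>0$, $m\in[0,k-1]_{\mathbb Z}$, $\mathcal S\subseteq[0,\min\{k-1,L-m-2\}]_{\mathbb Z}$ and $t\in[k+1,T-m-1]_{\mathbb Z}$, and $$x_t-x_{t+k}\le(\underline C+(k-m)V-\overline V)y_{t-m-1}+V\sum_{i=1}^m y_{t-i}+\overline V y_t-\underline C y_{t+k}-\sum_{s\in\mathcal S}(\underline C+(k-s)V-\overline V)(y_{t+s}-y_{t+s+1}),$$ indexed by the same $k,m,\mathcal S$ and $t\in[m+2,T-k]_{\mathbb Z}$. For any given point $(\mathbf x,\mathbf y)\in\mathbb R_+^{2T}$, a most violated inequality of each family can be determined in $O(T^3)$ time if a violated inequality of that family exists.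
   Context: For integers $a,b$, $[a,b]_{\mathbb Z}=\{a,a+1,\dots,b\}$ if $a\le b$ and $\emptyset$ otherwise. Fix a positive integer $T$, a positive integer $L$ (minimum up time), and reals $\overline C,\underline C,V,\overline V$ with $\overline C>\underline C>0$, $V>0$, $\overline V+V\le\overline C$ and $\underline C<\overline V<\underline C+V$; $\mathbf x=(x_1,\dots,x_T)$, $\mathbf y=(y_1,\dots,y_T)$. For an inequality $a^\top(\mathbf x,\mathbf y)\le b$, its violation at a given point is $a^\top(\mathbf x,\mathbf y)-b$; it is violated if this is positive, and a most violated inequality of a family is one maximizing this quantity over the family. Time is measured in arithmetic operations and comparisons on the input numbers. *)

(* Defs.v *)
From HB Require Import structures.
From mathcomp Require Import all_boot all_order all_algebra.
From mathcomp Require Import reals.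
Set Implicit Arguments. Unset Strict Implicit. Unset Printing Implicit Defensive.
Import Order.TTheory GRing.Theory Num.Theory.
Local Open Scope ring_scope.

(* Model of computation: algebraic computation trees over an abstract value  *)
(* type [Val].  Each arithmetic operation, constant load and comparison on   *)
(* numbers costs one unit; control flow / index bookkeeping on [nat] is free *)
(* (time is measured in arithmetic operations and comparisons on the input   *)
(* numbers).  Algorithms are polymorphic in [Val], so (by parametricity)     *)
(* they can only access numbers through the primitives below.               *)

Inductive binop := OpAdd | OpSub | OpMul | OpDiv.

Inductive comp (Val A : Type) : Type :=
| Ret of A
| Cst of int & (Val -> comp Val A)
| Op of binop & Val & Val & (Val -> comp Val A)
| Cmp of Val & Val & (bool -> comp Val A).

Definition eval_binop (R : realType) (o : binop) (a b : R) : R :=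
  match o with
  | OpAdd => a + b | OpSub => a - b | OpMul => a * b | OpDiv => a / b
  end.

Fixpoint run (R : realType) (A : Type) (c : comp R A) : A * nat :=
  match c with
  | Ret a => (a, 0%N)
  | Cst z k => let r := run (k (z%:~R)) in (r.1, r.2.+1)
  | Op o a b k => let r := run (k (eval_binop o a b)) in (r.1, r.2.+1)
  | Cmp a b k => let r := run (k (a <= b)) in (r.1, r.2.+1)
  end.

(* An inequality index (k, m, S, t); S is a duplicate-free list of naturals. *)
Definition ineq_idx := (nat * nat * seq nat * nat)%type.

(* Input: T, L, Cbar, Cunder, V, Vbar, x, y (x_i, y_i for i in 1..T).
   Output: [Some i] for a (claimed) most violated inequality, or [None]. *)
Definition separation_alg :=
  forall Val : Type, nat -> nat -> Val -> Val -> Val -> Val ->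
    (nat -> Val) -> (nat -> Val) -> comp Val (option ineq_idx).

Section Families.
Variables (R : realType) (T L : nat) (Cb Cu V Vb : R) (x y : nat -> R).

Definition kmS_ok (k m : nat) (S : seq nat) : bool :=
  [&& (1 <= k)%N, (k <= T - 1)%N, 0 < Cb - Cu - k%:R * V, (m <= k - 1)%N,
      uniq S & all (fun s => (s <= k - 1)%N && (s + m + 2 <= L)%N) S].

Definition fam1 (i : ineq_idx) : bool :=
  let: (k, m, Ss, t) := i in
  [&& kmS_ok k m Ss, (k + 1 <= t)%N & (t + m + 1 <= T)%N].

Definition fam2 (i : ineq_idx) : bool :=
  let: (k, m, Ss, t) := i in
  [&& kmS_ok k m Ss, (m + 2 <= t)%N & (t + k <= T)%N].

Definition coef (k j : nat) : R := Cu + (k%:R - j%:R) * V - Vb.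

Definition viol1 (i : ineq_idx) : R :=
  let: (k, m, Ss, t) := i in
  (x t - x (t - k)) -
  (coef k m * y (t + m + 1) + V * (\sum_(1 <= j < m.+1) y (t + j))
   + Vb * y t - Cu * y (t - k)
   - \sum_(s <- Ss) coef k s * (y (t - s) - y (t - s - 1))).

Definition viol2 (i : ineq_idx) : R :=
  let: (k, m, Ss, t) := i in
  (x t - x (t + k)) -
  (coef k m * y (t - m - 1) + V * (\sum_(1 <= j < m.+1) y (t - j))
   + Vb * y t - Cu * y (t + k)
   - \sum_(s <- Ss) coef k s * (y (t + s) - y (t + s + 1))).

Definition most_violated_spec (fam : ineq_idx -> bool) (viol : ineq_idx -> R)
  (out : option ineq_idx) : Prop :=
  (exists i, fam i /\ 0 < viol i) ->
  exists i, [/\ out = Some i, fam i & forall j, fam j -> viol j <= viol i].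

End Families.

Definition params_ok (R : realType) (T L : nat) (Cb Cu V Vb : R) : Prop :=
  [/\ (0 < T)%N, (0 < L)%N, Cu < Cb & 0 < Cu] /\
  [/\ 0 < V, Vb + V <= Cb, Cu < Vb & Vb < Cu + V].

(* Main.v *)
Require Import Defs.
From HB Require Import structures.
From mathcomp Require Import all_boot all_order all_algebra.
From mathcomp Require Import reals.
From mathcomp Require Import zify lra.
Import Order.TTheory GRing.Theory Num.Theory.
Local Open Scope ring_scope.
Set Implicit Arguments. Unset Strict Implicit. Unset Printing Implicit Defensive.

Section Monad.
Variable Val : Type.
Fixpoint bind A B (c : Defs.comp Val A) (f : A -> Defs.comp Val B) : Defs.comp Val B :=
  match c with
  | Ret a => f a
  | Cst z k => Cst z (fun v => bind (k v) f)
  | Op o a b k => Op o a b (fun v => bind (k v) f)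
  | Cmp a b k => Cmp a b (fun v => bind (k v) f)
  end.
Fixpoint foldM A B (f : A -> B -> Defs.comp Val A) (a : A) (l : seq B) : Defs.comp Val A :=
  match l with [::] => Ret Val a | b :: l' => bind (f a b) (fun a' => foldM f a' l') end.
Definition scan A (n : nat) (a0 : A) (step : nat -> A -> Defs.comp Val A) : Defs.comp Val (nat -> A) :=
  bind (foldM (fun (st : A * (nat -> A)) s => bind (step s st.1)
           (fun a => Ret Val (a, fun i => if i == s.+1 then a else st.2 i)))
        (a0, fun _ => a0) (iota 0 n)) (fun st => Ret Val st.2).
End Monad.

Section RunLemmas.
Variable R : realType.

Lemma run_bind A B (c : Defs.comp R A) (f : A -> Defs.comp R B) :
  run (bind c f) = ((run (f (run c).1)).1, ((run c).2 + (run (f (run c).1)).2)%N).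
Proof.
elim: c => [a|z k IH|o a b k IH|a b k IH] /=; first by case: (run (f a)).
all: by rewrite IH.
Qed.

Lemma run_foldM1 A B (f : A -> B -> Defs.comp R A) a l :
  (run (foldM f a l)).1 = foldl (fun a b => (run (f a b)).1) a l.
Proof. by elim: l a => [|b l IH] a //=; rewrite run_bind /= IH. Qed.

Lemma run_foldM2 A (B : eqType) (f : A -> B -> Defs.comp R A) a (l : seq B) K :
  (forall a b, b \in l -> ((run (f a b)).2 <= K)%N) ->
  ((run (foldM f a l)).2 <= size l * K)%N.
Proof.
elim: l a => [|b l IH] a H //=; rewrite run_bind /= mulSn leq_add //.
  by apply: H; rewrite inE eqxx.
by apply: IH => a' b' Hb; apply: H; rewrite inE Hb orbT.
Qed.

Lemma foldl_iota_inv A (I : nat -> A -> Prop) (g : A -> nat -> A) a lo n :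
  I 0%N a -> (forall i a, (i < n)%N -> I i a -> I i.+1 (g a (lo + i)%N)) ->
  I n (foldl g a (iota lo n)).
Proof.
move=> H0; elim: n => [|n IH] HS; first by [].
rewrite -[n.+1]addn1 iotaD foldl_cat /= addn1; apply: (HS) => //.
by apply: IH => i b Hi; apply: HS; lia.
Qed.

Lemma run_scan A n (a0 : A) (step : nat -> A -> Defs.comp R A) (g : nat -> A -> A) :
  (forall s a, (run (step s a)).1 = g s a) ->
  forall i, (i <= n)%N ->
  (run (scan n a0 step)).1 i = foldl (fun a s => g s a) a0 (iota 0 i).
Proof.
move=> Hg i Hi; rewrite /scan run_bind /= run_foldM1.
set sv := fun j => foldl (fun a s => g s a) a0 (iota 0 j).
have svS j : sv j.+1 = g j (sv j) by rewrite /sv -[j.+1]addn1 iotaD foldl_cat.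
pose I := fun j (st : A * (nat -> A)) => st.1 = sv j /\ forall l, (l <= j)%N -> st.2 l = sv l.
have [_ ->] // : I n (foldl (fun a b => (run (bind (step b a.1)
   (fun a1 => Ret R (a1, fun i => if i == b.+1 then a1 else a.2 i)))).1) (a0, fun _ => a0) (iota 0 n)).
apply: foldl_iota_inv => [|j [a1 f] Hj [/= E1 E2]].
  by split => // l; rewrite leqn0 => /eqP ->.
rewrite run_bind /= Hg E1 add0n -svS; split => // l Hl /=.
case: (l =P j.+1) => [->|Hne] //; apply: E2; lia.
Qed.

Lemma run_scan2 A n (a0 : A) (step : nat -> A -> Defs.comp R A) K :
  (forall s a, ((run (step s a)).2 <= K)%N) ->
  ((run (scan n a0 step)).2 <= n * K)%N.
Proof.
move=> H; rewrite /scan run_bind /= addn0.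
rewrite -[n in (n * _)%N](size_iota 0 n); apply: run_foldM2 => a b _.
by rewrite run_bind /= addn0.
Qed.
End RunLemmas.

Section Alg.
Variables (Val : Type) (ik im ij iS iS1 : nat -> nat -> nat) (tlo tn : nat -> nat)
  (mb : nat -> nat -> nat) (T L : nat) (Cb Cu V Vb : Val) (x y : nat -> Val).

Definition coefM A (k j : nat) (cont : Val -> Defs.comp Val A) : Defs.comp Val A :=
  Cst (Posz k) (fun kc => Cst (Posz j) (fun jc => Op OpSub kc jc (fun d =>
    Op OpMul d V (fun e => Op OpAdd Cu e (fun f => Op OpSub f Vb cont))))).

Definition Pstep (k t s : nat) (st : Val * seq nat) : Defs.comp Val (Val * seq nat) :=
  coefM k s (fun c => Op OpSub (y (iS t s)) (y (iS1 t s)) (fun d => Op OpMul c d (fun p =>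
   Cst 0 (fun z => Cmp p z (fun b => if b then Ret Val st
     else Op OpAdd st.1 p (fun v => Ret Val (v, rcons st.2 s))))))).

Definition Qstep (t j : nat) (q : Val) : Defs.comp Val Val :=
  Op OpAdd q (y (ij t j.+1)) (fun v => Ret Val v).

Definition update (st : option (Val * ineq_idx)) (v : Val) (i : ineq_idx) :
  Defs.comp Val (option (Val * ineq_idx)) :=
  match st with
  | None => Ret Val (Some (v, i))
  | Some (bv, _) => Cmp v bv (fun b => if b then Ret Val st else Ret Val (Some (v, i)))
  end.

Definition mbody (k t : nat) (Pt : nat -> Val * seq nat) (Qt : nat -> Val)
  (st : option (Val * ineq_idx)) (m : nat) :=
  let n := minn k (L - m.+1) in
  Op OpSub (x t) (x (ik t k)) (fun a1 => coefM k m (fun cm => Op OpMul cm (y (im t m)) (fun b1 =>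
  Op OpMul V (Qt m) (fun b2 => Op OpAdd b1 b2 (fun b3 => Op OpMul Vb (y t) (fun b4 =>
  Op OpAdd b3 b4 (fun b5 => Op OpMul Cu (y (ik t k)) (fun b6 => Op OpSub b5 b6 (fun b7 =>
  Op OpSub b7 (Pt n).1 (fun b8 => Op OpSub a1 b8 (fun v =>
    update st v (k, m, (Pt n).2, t)))))))))))).

Definition tbody (k : nat) (st : option (Val * ineq_idx)) (t : nat) :=
  Cst 0 (fun z => bind (scan k (z, [::]) (Pstep k t)) (fun Pt =>
    bind (scan T z (Qstep t)) (fun Qt => foldM (mbody k t Pt Qt) st (iota 0 (mb k t))))).

Definition kbody (st : option (Val * ineq_idx)) (k : nat) :=
  Cst (Posz k) (fun kc => Op OpMul kc V (fun kv => Op OpSub Cb Cu (fun a => Op OpSub a kv (fun a2 =>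
   Cst 0 (fun z => Cmp a2 z (fun b => if b then Ret Val st
     else foldM (tbody k) st (iota (tlo k) (tn k)))))))).

Definition algg : Defs.comp Val (option ineq_idx) :=
  bind (foldM kbody None (iota 1 T.-1)) (fun st => Ret Val (omap snd st)).
End Alg.

Definition alg1 : separation_alg := fun Val T L Cb Cu V Vb x y =>
  algg (fun t k => t - k)%N (fun t m => t + m + 1)%N (fun t j => t + j)%N
       (fun t s => t - s)%N (fun t s => t - s - 1)%N
       (fun k => k.+1) (fun k => T - k)%N (fun k t => minn k (T - t)) T L Cb Cu V Vb x y.

Definition alg2 : separation_alg := fun Val T L Cb Cu V Vb x y =>
  algg (fun t k => t + k)%N (fun t m => t - m - 1)%N (fun t j => t - j)%N
       (fun t s => t + s)%N (fun t s => t + s + 1)%N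
       (fun k => 1%N) (fun k => T - k)%N (fun k t => minn k (t - 1)) T L Cb Cu V Vb x y.

Section Sem.
Variables (R : realType) (ik im ij iS iS1 : nat -> nat -> nat) (tlo tn : nat -> nat)
  (mb : nat -> nat -> nat) (tcond : nat -> nat -> nat -> bool)
  (T L : nat) (Cb Cu V Vb : R) (x y : nat -> R).

Definition term k t s := coef Cu V Vb k s * (y (iS t s) - y (iS1 t s)).
Definition Sf k t n := [seq s <- iota 0 n | ~~ (term k t s <= 0)].

Lemma run_Cst A z (f : R -> Defs.comp R A) :
  run (Cst z f) = ((run (f z%:~R)).1, (run (f z%:~R)).2.+1).
Proof. by []. Qed.

Lemma run_coefM A k j (cont : R -> Defs.comp R A) :
  run (coefM Cu V Vb k j cont) =
  ((run (cont (coef Cu V Vb k j))).1, ((run (cont (coef Cu V Vb k j))).2 + 6)%N).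
Proof. by rewrite /= !addnS addn0. Qed.

Lemma run_Pstep k t s st :
  (run (Pstep iS iS1 Cu V Vb y k t s st)).1 =
    if term k t s <= 0 then st else (st.1 + term k t s, rcons st.2 s).
Proof. by rewrite /Pstep run_coefM /=; case: ifP. Qed.

Lemma run_Pstep2 k t s st : ((run (Pstep iS iS1 Cu V Vb y k t s st)).2 <= 11)%N.
Proof. by rewrite /Pstep run_coefM /=; case: ifP. Qed.

Lemma Psem k t n : (n <= k)%N ->
  (run (scan k (0%:~R, [::]) (Pstep iS iS1 Cu V Vb y k t))).1 n =
  (\sum_(s <- Sf k t n) term k t s, Sf k t n).
Proof.
move=> Hn; rewrite (@run_scan R _ _ _ _ (fun s st => if term k t s <= 0 then st
    else (st.1 + term k t s, rcons st.2 s))) //; last by move=> s a; rewrite run_Pstep.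
elim: n Hn => [|n IH] Hn; first by rewrite /Sf /= big_nil.
rewrite -[n.+1]addn1 iotaD foldl_cat /= IH; last by lia.
rewrite /Sf iotaD filter_cat /= add0n.
case: ifP => H /=; first by rewrite cats0.
by rewrite cats1 big_rcons /=.
Qed.

Lemma Qsem t m : (m <= T)%N ->
  (run (scan T 0%:~R (Qstep ij y t))).1 m = \sum_(1 <= j < m.+1) y (ij t j).
Proof.
move=> Hm; rewrite (@run_scan R _ _ _ _ (fun j q => q + y (ij t j.+1))) //.
elim: m Hm => [|m IH] Hm; first by rewrite big_geq.
rewrite -[m.+1]addn1 iotaD foldl_cat /= IH; last by lia.
by rewrite addn1 [in RHS]big_nat_recr.
Qed.

Lemma sum_best (f : nat -> R) n (S : seq nat) :
  uniq S -> all (fun s => s < n)%N S ->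
  \sum_(s <- S) f s <= \sum_(s <- [seq s <- iota 0 n | ~~ (f s <= 0)]) f s.
Proof.
move=> uS aS.
pose g s := if f s <= 0 then 0 else f s.
apply: (@le_trans _ _ (\sum_(s <- S) g s)).
  by apply: ler_sum => s _; rewrite /g; case: ifP.
have -> : \sum_(s <- S) g s = \sum_(s <- iota 0 n | s \in S) g s.
  rewrite -[RHS]big_filter; apply: perm_big; apply: uniq_perm => //.
    by rewrite filter_uniq // iota_uniq.
  move=> s; rewrite mem_filter mem_iota /=; apply/idP/idP => [H|/andP [] //].
  by rewrite H /=; move/allP: aS => /(_ s H).
rewrite big_filter [X in X <= _]big_mkcond [X in _ <= X]big_mkcond /=.
apply: ler_sum => s _; rewrite /g; case: (s \in S); case: ifP => //= H.
by apply: ltW; rewrite ltNge H.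
Qed.

Definition famg (i : ineq_idx) : bool :=
  let: (k, m, Ss, t) := i in kmS_ok T L Cb Cu V k m Ss && tcond k m t.

Definition violg (i : ineq_idx) : R :=
  let: (k, m, Ss, t) := i in
  (x t - x (ik t k)) -
  (coef Cu V Vb k m * y (im t m) + V * (\sum_(1 <= j < m.+1) y (ij t j))
   + Vb * y t - Cu * y (ik t k)
   - \sum_(s <- Ss) coef Cu V Vb k s * (y (iS t s) - y (iS1 t s))).

Definition Inv (Rg : nat -> nat -> nat -> Prop) (st : option (R * ineq_idx)) : Prop :=
  match st with
  | None => forall k m S t, famg (k, m, S, t) -> ~ Rg k m t
  | Some (bv, bi) => [/\ famg bi, violg bi = bv &
      forall k m S t, famg (k, m, S, t) -> Rg k m t -> violg (k, m, S, t) <= bv]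
  end.

Lemma Inv_mono (Rg Rg' : nat -> nat -> nat -> Prop) st :
  Inv Rg st -> (forall k m S t, famg (k, m, S, t) -> Rg' k m t -> Rg k m t) -> Inv Rg' st.
Proof.
case: st => [[bv bi]|] /=.
  by move=> [H1 H2 H3] H; split => // k m S t Hf HR; apply: H3 => //; apply: (H k m S t Hf HR).
by move=> H H' k m S t Hf HR; apply: (H k m S t Hf); apply: (H' k m S t Hf HR).
Qed.

Lemma Inv_update (Rg : nat -> nat -> nat -> Prop) st v k m S0 t :
  Inv Rg st -> famg (k, m, S0, t) -> violg (k, m, S0, t) = v ->
  (forall S, famg (k, m, S, t) -> violg (k, m, S, t) <= v) ->
  Inv (fun k' m' t' => Rg k' m' t' \/ (k' = k /\ m' = m /\ t' = t))
      (run (update st v (k, m, S0, t))).1.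
Proof.
move=> HI Hf Hv Hb; case: st HI => [[bv bi]|] /=.
  move=> [H1 H2 H3]; case: ifP => Hle /=.
    split => // k' m' S t' Hf' [HR|[E1 [E2 E3]]]; first exact: (H3 _ _ _ _ Hf' HR).
    by subst; exact: le_trans (Hb _ Hf') Hle.
  have Hlt : bv < v by rewrite ltNge Hle.
  split => // k' m' S t' Hf' [HR|[E1 [E2 E3]]]; last by subst; exact: (Hb _ Hf').
  exact: le_trans (H3 _ _ _ _ Hf' HR) (ltW Hlt).
move=> H; split => // k' m' S t' Hf' [HR|[E1 [E2 E3]]]; last by subst; exact: (Hb _ Hf').
by case: (H _ _ _ _ Hf' HR).
Qed.

Lemma run_mbody k t Pt Qt st m :
  let n := minn k (L - m.+1) in
  (run (mbody ik im L Cu V Vb x y k t Pt Qt st m)).1 =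
  (run (update st ((x t - x (ik t k)) - (coef Cu V Vb k m * y (im t m) + V * Qt m
     + Vb * y t - Cu * y (ik t k) - (Pt n).1)) (k, m, (Pt n).2, t))).1.
Proof. by []. Qed.

Lemma run_mbody2 k t Pt Qt st m :
  ((run (mbody ik im L Cu V Vb x y k t Pt Qt st m)).2 <= 17)%N.
Proof. rewrite /mbody /=; case: st => [[bv bi]|] //=; by case: ifP. Qed.

Hypothesis Hrange : forall k m t, (1 <= k)%N -> (k <= T - 1)%N ->
  ((m <= k - 1)%N && tcond k m t) = ((tlo k <= t < tlo k + tn k) && (m < mb k t))%N.
Hypothesis Hmb : forall k t, (mb k t <= k)%N.
Hypothesis Htn : forall k, (tn k <= T)%N.

Lemma mloop k t Rg st Pt Qt :
  (1 <= k)%N -> (k <= T - 1)%N -> 0 < Cb - Cu - k%:R * V ->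
  (tlo k <= t < tlo k + tn k)%N ->
  (forall n, (n <= k)%N -> Pt n = (\sum_(s <- Sf k t n) term k t s, Sf k t n)) ->
  (forall m, (m <= T)%N -> Qt m = \sum_(1 <= j < m.+1) y (ij t j)) ->
  Inv Rg st ->
  Inv (fun k' m' t' => Rg k' m' t' \/ (k' = k /\ t' = t /\ (m' < mb k t)%N))
    (run (foldM (mbody ik im L Cu V Vb x y k t Pt Qt) st (iota 0 (mb k t)))).1.
Proof.
move=> Hk1 Hk2 Hpos Ht HP HQ HI; rewrite run_foldM1.
apply: (foldl_iota_inv (I := fun i st => Inv (fun k' m' t' => Rg k' m' t' \/
   (k' = k /\ t' = t /\ (m' < i)%N)) st)) => [|i st' Hi HI'] /=.
  by apply: (Inv_mono HI) => k' m' S t' _ [//|[_ [_ ]]].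
rewrite add0n (_ : Cu + (k%:~R - i%:~R) * V - Vb = coef Cu V Vb k i) //.
set n := minn k (L - i.+1).
have Hn : (n <= k)%N by rewrite geq_minl.
have HiT : (i <= T)%N by have := Hmb k t; lia.
rewrite HP // HQ //.
have Htc : ((i <= k - 1)%N && tcond k i t) by rewrite Hrange // Ht Hi.
move/andP: Htc => [Hik Htc].
have Hf : famg (k, i, Sf k t n, t).
  rewrite /famg /kmS_ok Hk1 Hk2 Hpos Hik Htc /= andbT filter_uniq ?iota_uniq //=.
  apply/allP => s; rewrite mem_filter mem_iota => /andP [_ Hs].
  rewrite /n in Hs; apply/andP; split; lia.
apply: Inv_mono (Inv_update HI' Hf _ _) _ => //.
  move=> S /andP [Hok _]; move: Hok => /and5P [_ _ _ _ /andP [uS aS]].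
  have aS' : all (fun s => s < n)%N S.
    apply/allP => s Hs; move/allP: aS => /(_ s Hs) /andP [H1 H2]; rewrite /n; lia.
  have := sum_best (term k t) uS aS'; rewrite /term /Sf /= => H; lra.
move=> k' m' S t' _ [HR|[E1 [E2 E3]]]; first by left; left.
case: (ltngtP m' i) => Hm; [by left; right | lia | by right].
Qed.

Lemma tstep k t Rg st :
  (1 <= k)%N -> (k <= T - 1)%N -> 0 < Cb - Cu - k%:R * V ->
  (tlo k <= t < tlo k + tn k)%N -> Inv Rg st ->
  Inv (fun k' m' t' => Rg k' m' t' \/ (k' = k /\ t' = t /\ (m' < mb k t)%N))
    (run (tbody ik im ij iS iS1 mb T L Cu V Vb x y k st t)).1.
Proof.
move=> Hk1 Hk2 Hpos Ht HI.
rewrite /tbody run_Cst (run_bind (scan _ _ _)) (run_bind (scan _ _ _)).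
apply: mloop => //.
  by move=> n Hn; rewrite Psem.
by move=> m Hm; rewrite Qsem.
Qed.

Lemma tloop k Rg st :
  (1 <= k)%N -> (k <= T - 1)%N -> 0 < Cb - Cu - k%:R * V -> Inv Rg st ->
  Inv (fun k' m' t' => Rg k' m' t' \/
        (k' = k /\ (tlo k <= t' < tlo k + tn k)%N /\ (m' < mb k t')%N))
    (run (foldM (tbody ik im ij iS iS1 mb T L Cu V Vb x y k) st (iota (tlo k) (tn k)))).1.
Proof.
move=> Hk1 Hk2 Hpos HI; rewrite run_foldM1.
apply: (foldl_iota_inv (I := fun i st => Inv (fun k' m' t' => Rg k' m' t' \/
   (k' = k /\ (tlo k <= t' < tlo k + i)%N /\ (m' < mb k t')%N)) st)) => [|i st' Hi HI'] /=.
  apply: (Inv_mono HI) => k' m' S t' _ [//|[_ [Ht _]]]; lia.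
apply: (Inv_mono (tstep _ _ _ _ HI')) => //; first lia.
move=> k' m' S t' _ [HR|[E1 [Ht Hm]]]; first by left; left.
case: (ltngtP t' (tlo k + i)) => Ht'; [by left; right; repeat split => //; lia | lia |].
by right; subst; repeat split.
Qed.

Lemma kstep k Rg st :
  (1 <= k)%N -> (k <= T - 1)%N -> Inv Rg st ->
  Inv (fun k' m' t' => Rg k' m' t' \/
        (k' = k /\ (tlo k' <= t' < tlo k' + tn k')%N /\ (m' < mb k' t')%N))
    (run (kbody ik im ij iS iS1 tlo tn mb T L Cb Cu V Vb x y st k)).1.
Proof.
move=> Hk1 Hk2 HI; rewrite /kbody run_Cst /=.
case: ifP => Hc.
  apply: (Inv_mono HI) => k' m' S t' Hf [//|[E1 _]]; subst k'.
  move: Hf; rewrite /famg /kmS_ok => /andP [/and5P [_ _ Hp _ _] _].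
  by move: Hc; rewrite leNgt Hp.
have Hpos : 0 < Cb - Cu - k%:R * V by rewrite ltNge Hc.
apply: (Inv_mono (tloop Hk1 Hk2 Hpos HI)) => k' m' S t' _ [HR|[E1 H]]; first by left.
by right; subst.
Qed.

Lemma kloop :
  Inv (fun k' m' t' => (1 <= k' < 1 + T.-1)%N /\
         (tlo k' <= t' < tlo k' + tn k')%N /\ (m' < mb k' t')%N)
    (run (foldM (kbody ik im ij iS iS1 tlo tn mb T L Cb Cu V Vb x y) None (iota 1 T.-1))).1.
Proof.
rewrite run_foldM1.
apply: (foldl_iota_inv (I := fun i st => Inv (fun k' m' t' => (1 <= k' < 1 + i)%N /\
         (tlo k' <= t' < tlo k' + tn k')%N /\ (m' < mb k' t')%N) st)) => [|i st' Hi HI'] /=.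
  by move=> k m S t _ [Hk _]; lia.
apply: (Inv_mono (kstep _ _ HI')); [lia | lia |].
move=> k' m' S t' _ [Hk [Ht Hm]].
case: (ltngtP k' (1 + i)) => Hk'; [by left; repeat split => //; lia | lia | by right; subst].
Qed.

Lemma algg_spec :
  most_violated_spec famg violg (run (algg ik im ij iS iS1 tlo tn mb T L Cb Cu V Vb x y)).1.
Proof.
rewrite /algg run_bind /=.
move: kloop.
case: (run _).1 => [[bv bi]|] /=.
  move=> [Hf Hv Hmax] _; exists bi; split => //.
  case=> [[[k m] S] t] Hf'; rewrite Hv; apply: Hmax => //.
  move: (Hf') => /andP [/and5P [Hk1 Hk2 _ Hm _] Htc].
  have := Hrange m t Hk1 Hk2; rewrite Hm Htc /= => /esym /andP [Ht Hmb'].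
  by split => //; lia.
move=> H [[[[k m] S] t] [Hf _]]; exfalso; apply: (H _ _ _ _ Hf).
move: (Hf) => /andP [/and5P [Hk1 Hk2 _ Hm _] Htc].
have := Hrange m t Hk1 Hk2; rewrite Hm Htc /= => /esym /andP [Ht Hmb'].
by split => //; lia.
Qed.

Lemma mloop_cost k t Pt Qt st :
  ((run (foldM (mbody ik im L Cu V Vb x y k t Pt Qt) st (iota 0 (mb k t)))).2 <= mb k t * 17)%N.
Proof.
apply: leq_trans (@run_foldM2 R _ _ _ _ _ 17 _) _; first by move=> a b _; apply: run_mbody2.
by rewrite size_iota.
Qed.

Lemma tcost k st t : (k <= T)%N ->
  ((run (tbody ik im ij iS iS1 mb T L Cu V Vb x y k st t)).2 <= 29 * T + 1)%N.
Proof.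
move=> HkT; rewrite /tbody run_Cst (run_bind (scan _ _ _)) (run_bind (scan _ _ _)) /=.
have h1 : ((run (scan k (0%:~R, [::]) (Pstep iS iS1 Cu V Vb y k t))).2 <= k * 11)%N.
  by apply: run_scan2 => s a; apply: run_Pstep2.
have h2 : ((run (scan T 0%:~R (Qstep ij y t))).2 <= T * 1)%N.
  by apply: run_scan2 => s a.
set c1 := (run (scan k _ _)).2 in h1 *.
set c2 := (run (scan T _ _)).2 in h2 *.
set c3 := (run (foldM _ _ _)).2.
have h3 : (c3 <= mb k t * 17)%N by apply: mloop_cost.
have := Hmb k t; lia.
Qed.

Lemma kcost k st : (k <= T)%N ->
  ((run (kbody ik im ij iS iS1 tlo tn mb T L Cb Cu V Vb x y st k)).2 <= 6 + T * (29 * T + 1))%N.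
Proof.
move=> HkT; rewrite /kbody run_Cst /=; case: ifP => _ //=.
rewrite !addnS addn0 ltnS !ltnS.
apply: leq_trans (@run_foldM2 R _ _ _ _ _ (29 * T + 1) _) _.
  by move=> a b _; apply: tcost.
by rewrite size_iota addn1 leq_mul2r Htn orbT.
Qed.

Lemma algg_cost : (0 < T)%N ->
  ((run (algg ik im ij iS iS1 tlo tn mb T L Cb Cu V Vb x y)).2 <= 40 * T ^ 3)%N.
Proof.
move=> HT; rewrite /algg run_bind /= addn0.
apply: leq_trans (@run_foldM2 R _ _ _ _ _ (6 + T * (29 * T + 1)) _) _.
  by move=> a b; rewrite mem_iota => Hb; apply: kcost; lia.
rewrite size_iota; nia.
Qed.
End Sem.

Unset Implicit Arguments.

Theorem proposition12 (R : realType) :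
  exists (alg1 alg2 : separation_alg) (c : nat),
  forall (T L : nat) (Cb Cu V Vb : R) (x y : nat -> R),
    params_ok T L Cb Cu V Vb ->
    (forall i, (1 <= i <= T)%N -> 0 <= x i /\ 0 <= y i) ->
    let r1 := run (alg1 R T L Cb Cu V Vb x y) in
    let r2 := run (alg2 R T L Cb Cu V Vb x y) in
    [/\ (r1.2 <= c * T ^ 3)%N,
        most_violated_spec (fam1 T L Cb Cu V) (viol1 Cu V Vb x y) r1.1,
        (r2.2 <= c * T ^ 3)%N &
        most_violated_spec (fam2 T L Cb Cu V) (viol2 Cu V Vb x y) r2.1].
Proof.
exists alg1, alg2, 40%N => T L Cb Cu V Vb x y [[HT _ _ _] _] _ /=.
split.
- apply: algg_cost => //; [by move=> k t; apply: geq_minl | by move=> k; apply: leq_subr].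
- apply: (@algg_spec R _ _ _ _ _ _ _ _ (fun k m t => (k + 1 <= t) && (t + m + 1 <= T))%N).
  + move=> k m t Hk1 Hk2; apply/idP/idP => H; lia.
  + by move=> k t; apply: geq_minl.
- apply: algg_cost => //; [by move=> k t; apply: geq_minl | by move=> k; apply: leq_subr].
- apply: (@algg_spec R _ _ _ _ _ _ _ _ (fun k m t => (m + 2 <= t) && (t + k <= T))%N).
  + move=> k m t Hk1 Hk2; apply/idP/idP => H; lia.
  + by move=> k t; apply: geq_minl.
Qed.
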